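(* Let $\lambda>0$ and $\mu>0$, and let $i(\cdot)$ and $d(\cdot)$ be probability distributions on $\{1,2,\dots\}$ with $d(1)>0$. Consider the continuous-time Markov chain on sequence lengths $n\in\{0,1,2,\dots\}$ induced by the indel process described in the context: from length $n$ the chain jumps to $n+k$ ($k\ge1$) at rate $(n+1)\lambda i(k)$, and to $n-k$ ($1\le k\le n$) at rate $(n-k+1)\mu d(k)$. Suppose this length process is time reversible with respect to an equilibrium distribution $q$ on $\{0,1,2,\dots\}$, i.e. $q$ is a probability distribution satisfying detailed balance for all these transitions, and $q(n)>0$ for all $n$. Then: (i) $q(x)=r(1-r)^x$ for all $x\in\{0,1,2,\dots\}$, where $1-r=\dfrac{\lambda i(1)}{\mu d(1)}$ and $0<r<1$; (ii) $\dfrac{\lambda}{\mu}=\sum_{k=1}^\infty (1-r)^k d(k)<1$; (iii) $i(k)=\dfrac{\mu}{\lambda}(1-r)^k d(k)$ for all $k\in\{1,2,\dots\}$. Conversely, for any $r\in(0,1)$, any probability distribution $d$ on $\{1,2,\dots\}$ with $d(1)>0$, and any $\mu>0$, defining $\lambda$ by (ii) and $i$ by (iii) yields a probability distribution $i$ on $\{1,2,\dots\}$ and rates for which the length process is reversible with equilibrium distribution $q$ given by (i).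
   Context: Indel model. A sequence of length $n$ has bases numbered $1,\dots,n$ and positions numbered $0,\dots,n$ (base $j$ lies between positions $j-1$ and $j$). An insertion of size $k\ge1$ at position $p\in\{0,\dots,n\}$ adds $k$ bases at that position and occurs at rate $\lambda i(k)$ for each such position. A deletion of size $k$ at position $p\in\{0,\dots,n-1\}$ removes the bases between positions $p$ and $p+k$, is allowed only when $1\le k\le n-p$, and occurs at rate $\mu d(k)$ for each such allowed pair $(p,k)$. Here $i(\cdot)$ and $d(\cdot)$ (the base insertion and deletion fragment size distributions) are probability distributions on the positive integers, and $\lambda,\mu$ are the total insertion and deletion rates per site on an infinitely long sequence. Consequently, a sequence of length $n$ has $n+1$ insertion positions and exactly $n-k+1$ allowed deletion positions for fragments of size $k\le n$. *)

(* Defs.v *)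
From Stdlib Require Import Reals.
Open Scope R_scope.

(* A probability distribution on the positive integers {1,2,...}:
   only the values at k >= 1 matter (value at 0 is ignored). *)
Definition pdist_pos (p : nat -> R) : Prop :=
  (forall k : nat, (1 <= k)%nat -> 0 <= p k) /\
  infinite_sum (fun k => p (S k)) 1.

Definition pdist_nat (q : nat -> R) : Prop :=
  (forall n : nat, 0 <= q n) /\ infinite_sum q 1.

(* Transition rate of the length process from length n to length m:
   n -> n+k (k>=1) at rate (n+1) lam i(k);
   n -> n-k (1<=k<=n) at rate (n-k+1) mu d(k)   (here n-k = m). *)
Definition len_rate (lam mu : R) (i d : nat -> R) (n m : nat) : R :=
  if Nat.ltb n m then INR (n + 1) * lam * i (m - n)%nat
  else if Nat.ltb m n then INR (m + 1) * mu * d (n - m)%nat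
  else 0.

Definition detailed_balance (lam mu : R) (i d q : nat -> R) : Prop :=
  forall n m : nat, q n * len_rate lam mu i d n m = q m * len_rate lam mu i d m n.

(* Main.v *)
Require Import Defs.
From Stdlib Require Import Reals Lra Lia.
Open Scope R_scope.

Lemma isum_ext (a b : nat -> R) l :
  (forall k, a k = b k) -> infinite_sum a l -> infinite_sum b l.
Proof.
  intros He H eps Heps. destruct (H eps Heps) as [N HN]. exists N.
  intros n Hn. rewrite <- (sum_eq a b n); auto.
Qed.

Lemma isum_scal (a : nat -> R) l c :
  infinite_sum a l -> infinite_sum (fun k => c * a k) (c * l).
Proof.
  intros H.
  assert (Hc : Un_cv (fun _ : nat => c) c).
  { intros eps Heps; exists 0%nat; intros; unfold R_dist.
    replace (c - c) with 0 by ring; rewrite Rabs_R0; lra. }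
  pose proof (CV_mult _ _ _ _ Hc H) as Hm.
  intros eps Heps. destruct (Hm eps Heps) as [N HN]. exists N.
  intros n Hn. specialize (HN n Hn). simpl in HN.
  rewrite scal_sum in HN.
  replace (sum_f_R0 (fun k => c * a k) n) with (sum_f_R0 (fun i => a i * c) n); auto.
  apply sum_eq; intros; ring.
Qed.

Lemma isum_minus (a b : nat -> R) la lb :
  infinite_sum a la -> infinite_sum b lb ->
  infinite_sum (fun k => a k - b k) (la - lb).
Proof.
  intros Ha Hb.
  pose proof (CV_minus _ _ _ _ Ha Hb) as Hm.
  intros eps Heps. destruct (Hm eps Heps) as [N HN]. exists N.
  intros n Hn. specialize (HN n Hn). simpl in HN.
  rewrite minus_sum. exact HN.
Qed.

Lemma isum_ge (a : nat -> R) l N :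
  infinite_sum a l -> (forall n, 0 <= a n) -> sum_f_R0 a N <= l.
Proof. intros H Hp. apply sum_incr; auto. Qed.

Lemma geom (c s : R) : 0 <= s < 1 ->
  infinite_sum (fun n => c * s ^ n) (c / (1 - s)).
Proof.
  intros Hs.
  assert (Ha : Rabs s < 1) by (rewrite Rabs_right; lra).
  pose proof (GP_infinite s Ha) as G. unfold Pser in G.
  pose proof (isum_scal _ _ c G) as G2.
  unfold Rdiv. eapply isum_ext; [|exact G2]. intros k; simpl; ring.
Qed.

Lemma pow_le1 (s : R) n : 0 <= s <= 1 -> s ^ n <= 1.
Proof.
  intros Hs. rewrite <- (pow1 n). apply pow_incr. lra.
Qed.

Lemma rate_up lam mu i d n k : (1 <= k)%nat ->
  len_rate lam mu i d n (n + k) = INR (n + 1) * lam * i k.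
Proof.
  intros Hk. unfold len_rate.
  rewrite (proj2 (Nat.ltb_lt n (n + k))) by lia.
  replace (n + k - n)%nat with k by lia. reflexivity.
Qed.

Lemma rate_down lam mu i d n k : (1 <= k)%nat ->
  len_rate lam mu i d (n + k) n = INR (n + 1) * mu * d k.
Proof.
  intros Hk. unfold len_rate.
  rewrite (proj2 (Nat.ltb_ge (n + k) n)) by lia.
  rewrite (proj2 (Nat.ltb_lt n (n + k))) by lia.
  replace (n + k - n)%nat with k by lia. reflexivity.
Qed.

Theorem proposition1 :
  (* forward direction *)
  (forall (lam mu : R) (i d q : nat -> R),
    0 < lam -> 0 < mu ->
    pdist_pos i -> pdist_pos d -> 0 < d 1%nat ->
    pdist_nat q -> (forall n : nat, 0 < q n) ->
    detailed_balance lam mu i d q ->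
    let r := 1 - lam * i 1%nat / (mu * d 1%nat) in
    (0 < r < 1 /\ (forall x : nat, q x = r * (1 - r) ^ x)) /\
    (infinite_sum (fun k => (1 - r) ^ (S k) * d (S k)) (lam / mu) /\ lam / mu < 1) /\
    (forall k : nat, (1 <= k)%nat -> i k = mu / lam * (1 - r) ^ k * d k))
  /\
  (* converse *)
  (forall (r mu : R) (d : nat -> R),
    0 < r < 1 -> pdist_pos d -> 0 < d 1%nat -> 0 < mu ->
    (exists lam : R, infinite_sum (fun k => (1 - r) ^ (S k) * d (S k)) (lam / mu)) /\
    (forall lam : R,
      infinite_sum (fun k => (1 - r) ^ (S k) * d (S k)) (lam / mu) ->
      let i := fun k : nat => mu / lam * (1 - r) ^ k * d k in
      let q := fun x : nat => r * (1 - r) ^ x in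
      0 < lam /\ pdist_pos i /\ pdist_nat q /\ detailed_balance lam mu i d q)).
Proof.
  split.
  - intros lam mu i d q Hl Hm [Hi0 Hi1] [Hd0 Hd1] Hd1p [Hq0 Hq1] Hqp Hdb r.
    set (s := lam * i 1%nat / (mu * d 1%nat)).
    assert (Hrs : 1 - r = s) by (unfold r, s; ring).
    rewrite Hrs.
    assert (key : forall n k, (1 <= k)%nat -> q n * lam * i k = q (n + k)%nat * mu * d k).
    { intros n k Hk. pose proof (Hdb n (n + k)%nat) as E.
      rewrite rate_up, rate_down in E by exact Hk.
      assert (Hn : 0 < INR (n + 1)) by (apply lt_0_INR; lia).
      apply (Rmult_eq_reg_l (INR (n + 1))); [|lra].
      replace (INR (n + 1) * (q n * lam * i k)) with (q n * (INR (n + 1) * lam * i k)) by ring.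
      rewrite E. ring. }
    assert (qs : forall n, q n = q 0%nat * s ^ n).
    { induction n as [|n IH]; [simpl; ring|].
      pose proof (key n 1%nat (le_n 1)) as K. rewrite Nat.add_1_r in K.
      assert (Hmd : mu * d 1%nat <> 0) by (apply Rgt_not_eq; apply Rmult_lt_0_compat; lra).
      assert (E : q (S n) = q n * s).
      { unfold s. apply (Rmult_eq_reg_r (mu * d 1%nat)); [|exact Hmd].
        transitivity (q n * lam * i 1%nat); [rewrite K; ring|]. field. lra. }
      rewrite E, IH. simpl. ring. }
    assert (Hq00 := Hqp 0%nat).
    assert (Hspos : 0 < s).
    { pose proof (Hqp 1%nat) as H1. rewrite qs in H1. simpl in H1.
      rewrite Rmult_1_r in H1.
      destruct (Rle_lt_dec s 0) as [Hc|Hc]; [|exact Hc].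
      exfalso. nra. }
    assert (Hslt : s < 1).
    { destruct (Rlt_le_dec s 1) as [Hc|Hc]; [exact Hc|exfalso].
      assert (Hb : forall N, INR (S N) * q 0%nat <= sum_f_R0 q N).
      { induction N as [|N IH].
        - simpl. lra.
        - rewrite tech5, S_INR.
          assert (q 0%nat <= q (S N)).
          { rewrite (qs (S N)). pose proof (pow_R1_Rle s (S N) Hc).
            assert (q 0%nat * 1 <= q 0%nat * s ^ S N) by (apply Rmult_le_compat_l; lra). lra. }
          lra. }
      destruct (INR_unbounded (/ q 0%nat)) as [N HN].
      pose proof (isum_ge q 1 N Hq1 Hq0) as Hle.
      pose proof (Hb N) as HbN. rewrite S_INR in HbN.
      assert (INR N * q 0%nat > / q 0%nat * q 0%nat) by (apply Rmult_gt_compat_r; lra).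
      rewrite Rinv_l in H by lra.
      pose proof (pos_INR N). nra. }
    assert (Hq0r : q 0%nat = r).
    { pose proof (geom (q 0%nat) s (conj (Rlt_le _ _ Hspos) Hslt)) as G.
      assert (G' : infinite_sum q (q 0%nat / (1 - s))).
      { eapply isum_ext; [|exact G]. intros k; simpl; symmetry; apply qs. }
      pose proof (uniqueness_sum _ _ _ G' Hq1) as U.
      assert (q 0%nat = 1 - s).
      { apply (Rmult_eq_reg_r (/ (1 - s))).
        - rewrite Rinv_r by lra. exact U.
        - apply Rgt_not_eq. apply Rinv_0_lt_compat. lra. }
      lra. }
    assert (Hik : forall k, (1 <= k)%nat -> i k = mu / lam * s ^ k * d k).
    { intros k Hk. pose proof (key 0%nat k Hk) as K. simpl in K.
      rewrite (qs k) in K. apply (Rmult_eq_reg_l (q 0%nat * lam)); [|nra].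
      transitivity (q 0%nat * s ^ k * mu * d k); [rewrite K; ring|]. field. lra. }
    split; [split; [lra|] | split].
    + intros x. rewrite qs, Hq0r. reflexivity.
    + assert (Hsum : infinite_sum (fun k => s ^ S k * d (S k)) (lam / mu)).
      { pose proof (isum_scal _ _ (lam / mu) Hi1) as G. rewrite Rmult_1_r in G.
        eapply isum_ext; [|exact G]. intros k. simpl.
        rewrite (Hik (S k)) by lia. simpl. field. split; lra. }
      split; [exact Hsum|].
      pose proof (isum_minus _ _ _ _ Hd1 Hsum) as M.
      pose proof (isum_ge _ _ 0%nat M) as G. simpl in G.
      assert (0 < (1 - s) * d 1%nat) by (apply Rmult_lt_0_compat; lra).
      assert (0 < d 1%nat - s * 1 * d 1%nat) by lra.
      assert (d 1%nat - s * 1 * d 1%nat <= 1 - lam / mu).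
      { apply G. intros n. assert (0 <= d (S n)) by (apply Hd0; lia).
        assert (s ^ S n <= 1) by (apply pow_le1; lra).
        assert (0 <= s ^ S n) by (apply pow_le; lra). assert (0 <= (1 - s ^ S n) * d (S n)) by (apply Rmult_le_pos; lra). simpl in *; nra. }
      lra.
    + exact Hik.
  - intros r mu d Hr [Hd0 Hd1] Hd1p Hm.
    assert (Hterm : forall n, 0 <= (1 - r) ^ S n * d (S n) <= d (S n)).
    { intros n. assert (0 <= d (S n)) by (apply Hd0; lia).
      assert ((1 - r) ^ S n <= 1) by (apply pow_le1; lra).
      assert (0 <= (1 - r) ^ S n) by (apply pow_le; lra). split; nra. }
    split.
    + destruct (Rseries_CV_comp (fun k => (1 - r) ^ S k * d (S k)) (fun k => d (S k)) Hterm
                  (exist _ 1 Hd1)) as [l Hl].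
      exists (mu * l). replace (mu * l / mu) with l by (field; lra). exact Hl.
    + intros lam Hs i q.
      pose proof (isum_ge _ _ 0%nat Hs (fun n => proj1 (Hterm n))) as G. simpl in G.
      assert (0 < (1 - r) * 1 * d 1%nat) by (apply Rmult_lt_0_compat; lra).
      assert (Hlam : 0 < lam).
      { assert (0 < lam / mu) by lra.
        replace lam with (lam / mu * mu) by (field; lra). nra. }
      split; [exact Hlam|split; [|split]].
      * split.
        -- intros k Hk. unfold i. assert (0 <= d k) by (apply Hd0; lia).
           assert (0 <= (1 - r) ^ k) by (apply pow_le; lra).
           assert (0 < mu / lam) by (apply Rdiv_lt_0_compat; lra).
           apply Rmult_le_pos; [|lra]. apply Rmult_le_pos; lra.
        -- pose proof (isum_scal _ _ (mu / lam) Hs) as S1.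
           replace (mu / lam * (lam / mu)) with 1 in S1 by (field; lra).
           eapply isum_ext; [|exact S1]. intros k. unfold i. ring.
      * split.
        -- intros n. unfold q. apply Rmult_le_pos; [lra|]. apply pow_le; lra.
        -- pose proof (geom r (1 - r)) as G2.
           replace (r / (1 - (1 - r))) with 1 in G2 by (field; lra).
           apply G2. lra.
      * intros n m. unfold q, i.
        destruct (Nat.lt_total n m) as [Hnm|[Hnm|Hnm]].
        -- replace m with (n + (m - n))%nat by lia.
           rewrite rate_up, rate_down by lia. rewrite pow_add. field. lra.
        -- subst. reflexivity.
        -- replace n with (m + (n - m))%nat by lia.
           rewrite rate_up, rate_down by lia. rewrite pow_add. field. lra.
Qed.
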